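(* Let $L$ be an atomic $0$-distributive lattice with at least three atoms. Then the metric dimension $\dim_M(G^c(L))$ is finite if and only if $G^c(L)$ is finite.
   Context: A lattice $L$ with $0$ is $0$-distributive if $a\wedge b=0$ and $a\wedge c=0$ imply $a\wedge(b\vee c)=0$; it is atomic if every nonzero element lies above an atom. $Z^*(L)=\{a\in L\setminus\{0\}:\ a\wedge b=0\text{ for some } b\neq 0\}$. $G^c(L)$ is the graph with vertex set $Z^*(L)$, distinct $a,b$ adjacent iff $a\wedge b\neq 0$ (under these hypotheses it is connected). For a connected graph $G$ and $S=\{v_1,\dots,v_k\}\subseteq V(G)$, the representation of $v$ is $D(v\mid S)=(d(v,v_1),\dots,d(v,v_k))$; $S$ is resolving if $D(u\mid S)=D(v\mid S)$ for $u,v\in V(G)\setminus S$ implies $u=v$; $\dim_M(G)$ is the minimum cardinality of a resolving set. *)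

(* Defs.v *)
From HB Require Import structures.
From mathcomp Require Import all_boot all_order.
Set Implicit Arguments. Unset Strict Implicit. Unset Printing Implicit Defensive.
Import Order.Theory.
Local Open Scope order_scope.

Section ZeroDivGraph.
Context {disp : Order.disp_t} {L : bLatticeType disp}.

Definition zero_distributive : Prop :=
  forall a b c : L, a `&` b = \bot -> a `&` c = \bot -> a `&` (b `|` c) = \bot.

Definition atom (a : L) : Prop :=
  a <> \bot /\ forall x : L, \bot < x -> x <= a -> x = a.

Definition atomic : Prop :=
  forall x : L, x <> \bot -> exists a, atom a /\ a <= x.

Definition Zstar (a : L) : Prop :=
  a <> \bot /\ exists b : L, b <> \bot /\ a `&` b = \bot.

Definition gadj (a b : L) : Prop :=
  Zstar a /\ Zstar b /\ a <> b /\ a `&` b <> \bot.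

Fixpoint reach (n : nat) (u v : L) : Prop :=
  match n with
  | 0 => u = v
  | n'.+1 => u = v \/ exists w, gadj u w /\ reach n' w v
  end.

Definition gdist (u v : L) (n : nat) : Prop :=
  reach n u v /\ forall m, (m < n)%N -> ~ reach m u v.

Definition same_repr (S : seq L) (u v : L) : Prop :=
  forall s, s \in S -> forall n, gdist u s n <-> gdist v s n.

Definition resolving (S : seq L) : Prop :=
  (forall s, s \in S -> Zstar s) /\
  forall u v, Zstar u -> Zstar v -> u \notin S -> v \notin S ->
    same_repr S u v -> u = v.

(* dim_M(G^c(L)) is finite: some finite resolving set exists *)
Definition finite_metric_dim : Prop := exists S : seq L, resolving S.

(* G^c(L) is finite: its vertex set Z*(L) is finite *)
Definition finite_graph : Prop :=
  exists s : seq L, forall x, Zstar x -> x \in s.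

End ZeroDivGraph.

(* Main.v *)
Require Import Defs.
From mathcomp Require Import all_boot all_order.
From Stdlib Require Import Classical.
Import Order.Theory.
Set Implicit Arguments. Unset Strict Implicit.

Lemma reach_S (disp : Order.disp_t) (L : bLatticeType disp) n (u v : L) :
  reach n u v -> reach n.+1 u v.
Proof.
elim: n u => [|n IH] u /=; first by left.
case=> [->|[w [g r]]]; first by left.
right; exists w; split => //; exact: IH.
Qed.

Lemma reach_addl (disp : Order.disp_t) (L : bLatticeType disp) k n (u v : L) :
  reach n u v -> reach (k + n) u v.
Proof. elim: k => [|k IH] // H; rewrite addSn; apply: reach_S; exact: IH. Qed.

Lemma reach_trans (disp : Order.disp_t) (L : bLatticeType disp) m n (u w v : L) :
  reach m u w -> reach n w v -> reach (m + n) u v.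
Proof.
elim: m u => [|m IH] u /=.
- by move=> -> .
- move=> [->|[w' [g r]]] H2.
  + by have := @reach_addl disp L m.+1 _ _ _ H2.
  + right; exists w'; split => //; exact: IH.
Qed.

Lemma gdist_fun (disp : Order.disp_t) (L : bLatticeType disp) (u s : L) n m :
  gdist u s n -> gdist u s m -> n = m.
Proof.
move=> [r1 h1] [r2 h2].
case: (ltngtP n m) => // H.
- by case: (h2 n H).
- by case: (h1 m H).
Qed.

Lemma gdist_ex (disp : Order.disp_t) (L : bLatticeType disp) (u s : L) D :
  reach D u s -> exists n, (n <= D)%N /\ gdist u s n.
Proof.
elim: D {-2}D (leqnn D) => [|D IH] D0 HD r.
- move: HD; rewrite leqn0 => /eqP E; subst D0.
  exists 0; split => //; split => // m; by rewrite ltn0.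
- case: (classic (forall m, (m < D0)%N -> ~ reach m u s)) => H.
  + exists D0; split => //.
  + have [m Hm] := not_all_ex_not _ _ H.
    have [Hlt Hr] : (m < D0)%N /\ reach m u s.
      split.
      * apply: NNPP => Hl; apply: Hm => Hl'; by case: (Hl Hl').
      * by apply: NNPP => Hn; apply: Hm => _.
    have Hm' : (m <= D)%N by rewrite -ltnS (leq_trans Hlt HD).
    have [n [Hn Hg]] := IH m Hm' Hr.
    exists n; split => //; apply: leq_trans Hn (ltnW Hlt).
Qed.

Lemma cover (T V : eqType) (Rel : T -> V -> Prop) (R : seq V) :
  forall P : T -> Prop,
  (forall x, P x -> exists r, r \in R /\ Rel x r) ->
  (forall x y r, P x -> P y -> Rel x r -> Rel y r -> x = y) ->
  exists s : seq T, forall x, P x -> x \in s.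
Proof.
elim: R => [|r R IH] P H1 H2.
- exists [::] => x Px. by have [r [] ] := H1 x Px.
- case: (classic (exists x, P x /\ Rel x r)) => [[x [Px Rx]]|Hn].
  + have [s Hs] : exists s : seq T, forall y, (P y /\ ~ Rel y r) -> y \in s.
      apply: (IH (fun y => P y /\ ~ Rel y r)).
      * move=> y [Py Ny]; have [r0 [Hr0 R0]] := H1 y Py.
        move: Hr0; rewrite inE => /orP [/eqP E|Hr0]; first by subst r0.
        by exists r0.
      * move=> a b c [Pa _] [Pb _]; exact: H2.
    exists (x :: s) => y Py; rewrite inE.
    case: (classic (Rel y r)) => Hy.
    * by rewrite (H2 _ _ _ Py Px Hy Rx) eqxx.
    * by rewrite Hs ?orbT.
  + apply: IH => // y Py; have [r0 [Hr0 R0]] := H1 y Py.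
    move: Hr0; rewrite inE => /orP [/eqP E|Hr0].
    * by subst r0; exfalso; apply: Hn; exists y.
    * by exists r0.
Qed.

Fixpoint vecs (D k : nat) : seq (seq nat) :=
  if k is k'.+1 then [seq i :: v | i <- iota 0 D.+1, v <- vecs D k'] else [:: [::]].

Lemma vecsP D r : all (fun i => i <= D)%N r -> r \in vecs D (size r).
Proof.
elim: r => [|i r IH] // /andP [Hi Hr].
change (i :: r \in [seq i :: v | i <- iota 0 D.+1, v <- vecs D (size r)]).
apply/allpairsP; exists (i, r); split; [|exact: IH|by []].
by rewrite mem_iota add0n ltnS Hi.
Qed.

Lemma pfilter (T : eqType) (P : T -> Prop) (s : seq T) :
  exists S : seq T, (forall x, x \in S -> P x) /\ (forall x, P x -> x \in s -> x \in S).
Proof.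
elim: s => [|y s [S [H1 H2]]]; first by exists [::].
case: (classic (P y)) => Py.
- exists (y :: S); split.
  + by move=> x; rewrite inE => /orP [/eqP ->|/H1].
  + move=> x Px; rewrite !inE => /orP [->//|xs]; by rewrite H2 ?orbT.
- exists S; split => // x Px; rewrite inE => /orP [/eqP E|]; last exact: H2.
  by subst.
Qed.

Lemma atoms_meet0 (disp : Order.disp_t) (L : bLatticeType disp) (p q : L) :
  atom p -> atom q -> p <> q -> (p `&` q = \bot)%O.
Proof.
move=> [p0 hp] [q0 hq] pq.
apply: NNPP => H.
have Hl : (\bot < p `&` q)%O by rewrite lt0x; apply/eqP.
have e1 := hp _ Hl (leIl _ _).
have e2 := hq _ Hl (leIr _ _).
by apply: pq; exact: (etrans (esym e1) e2).
Qed.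

Lemma reach1 (disp : Order.disp_t) (L : bLatticeType disp) (x y : L) :
  Zstar x -> Zstar y -> (x `&` y <> \bot)%O -> reach 1 x y.
Proof.
move=> zx zy H /=.
case: (eqVneq x y) => [->|nxy]; first by left.
right; exists y; split => //; split => //; split => //; split => //.
exact/eqP.
Qed.

Lemma meet_le_ne0 (disp : Order.disp_t) (L : bLatticeType disp) (x p : L) :
  (p <= x)%O -> p <> \bot%O -> (x `&` p <> \bot)%O.
Proof. by move=> /meet_idPr ->. Qed.

Lemma meet_le_ne0' (disp : Order.disp_t) (L : bLatticeType disp) (x p : L) :
  (p <= x)%O -> p <> \bot%O -> (p `&` x <> \bot)%O.
Proof. by move=> /meet_idPl ->. Qed.

Lemma diam4 (disp : Order.disp_t) (L : bLatticeType disp) :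
  @zero_distributive disp L -> @atomic disp L ->
  (exists a b c : L, atom a /\ atom b /\ atom c /\ a <> b /\ a <> c /\ b <> c) ->
  forall u v : L, Zstar u -> Zstar v -> reach 4 u v.
Proof.
move=> zd at3 [a [b [c [aa [ab [ac [nab [nac nbc]]]]]]]] u v zu zv.
have atomZ : forall p : L, atom p -> Zstar p.
  move=> p ap; split; first by case: ap.
  case: (eqVneq p a) => [Epa|npa].
  - subst p; exists b; split; first by case: ab.
    exact: atoms_meet0.
  - exists a; split; first by case: aa.
    by apply: atoms_meet0 => //; apply/eqP.
have [p [ap pu]] := at3 u (proj1 zu).
have [p' [ap' pv]] := at3 v (proj1 zv).
have [d [ad [ndp ndp']]] : exists d, atom d /\ d <> p /\ d <> p'.
  case: (eqVneq a p) => [Eap|nap]; case: (eqVneq a p') => [Eap'|nap'].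
  - subst; exists b; do !split => //; by move=> E; apply nab.
  - case: (eqVneq b p') => [Ebp'|nbp'].
    + subst; exists c; do !split => //; by move=> E; subst.
    + exists b; do !split => //; [by move=> E; subst | exact/eqP].
  - case: (eqVneq b p) => [Ebp|nbp].
    + subst; exists c; do !split => //; by move=> E; subst.
    + exists b; do !split => //; [exact/eqP | by move=> E; subst].
  - exists a; do !split => //; exact/eqP.
set w := (p `|` p')%O.
have p0 : p <> \bot%O by case: ap.
have p'0 : p' <> \bot%O by case: ap'.
have zw : Zstar w.
  split.
  - move=> E; apply: p0; apply/eqP; rewrite -lex0 -E /w; exact: leUl.
  - exists d; split; first by case: ad.
    rewrite meetC; apply: (zd); rewrite meetC; apply: atoms_meet0 => //; exact: nesym.
have r1 : reach 1 u p := reach1 zu (atomZ p ap) (meet_le_ne0 pu p0).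
have r2 : reach 1 p w := reach1 (atomZ p ap) zw (meet_le_ne0' (leUl p p') p0).
have r3 : reach 1 w p' := reach1 zw (atomZ p' ap') (@meet_le_ne0 _ _ w p' (leUr _ _) p'0).
have r4 : reach 1 p' v := reach1 (atomZ p' ap') zv (meet_le_ne0' pv p'0).
exact: (reach_trans r1 (reach_trans r2 (reach_trans r3 r4))).
Qed.

Unset Implicit Arguments. Set Strict Implicit.
Local Open Scope order_scope.

Theorem lemma3p2 (disp : Order.disp_t) (L : bLatticeType disp) :
  @zero_distributive disp L -> @atomic disp L ->
  (exists a b c : L, atom a /\ atom b /\ atom c /\ a <> b /\ a <> c /\ b <> c) ->
  (@finite_metric_dim disp L <-> @finite_graph disp L).
Proof.
move=> zd at3 h3; split.
- move=> [S [HS Hres]].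
  have dm := diam4 zd at3 h3.
  pose Rel (u : L) (r : seq nat) :=
    size r = size S /\ forall i, (i < size S)%N -> gdist u (nth \bot S i) (nth 0%N r i).
  have [s Hs] : exists s : seq L, forall x, (Zstar x /\ x \notin S) -> x \in s.
    apply: (@cover L _ Rel (vecs 4 (size S)) (fun u => Zstar u /\ u \notin S)).
    + move=> u [zu _].
      suff [r [Hsz [Ha Hr]]] : exists r : seq nat, size r = size S /\
          all (fun i => i <= 4)%N r /\
          forall i, (i < size S)%N -> gdist u (nth \bot S i) (nth 0%N r i).
        exists r; split; last by split.
        by rewrite -Hsz; apply: vecsP.
      have : forall x, x \in S -> Zstar x by [].
      elim: (S) => [|x S' IH] HS'.
      * by exists [::].
      * have [r [e1 [e2 e3]]] := IH (fun y hy => HS' y (mem_behead (s:=x :: S') hy)).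
        have [n [Hn Hg]] := gdist_ex (dm u x zu (HS' x (mem_head _ _))).
        exists (n :: r); split; first by rewrite /= e1.
        split; first by rewrite /= Hn.
        by case=> [|i] //= Hi; apply: e3.
    + move=> x y r [zx nx] [zy ny] [sx Rx] [sy Ry].
      apply: Hres => // t ht n.
      have hi : (index t S < size S)%N by rewrite index_mem.
      have := Rx _ hi; have := Ry _ hi; rewrite nth_index // => gy gx.
      split => g.
      * by rewrite (gdist_fun g gx).
      * by rewrite (gdist_fun g gy).
  exists (S ++ s) => x zx; rewrite mem_cat.
  case: (boolP (x \in S)) => //= nx; exact: Hs.
- move=> [s Hs].
  have [S [HS1 HS2]] := pfilter (@Zstar disp L) s.
  exists S; split => // u v zu _ nu; by rewrite HS2 ?Hs in nu.
Qed.
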